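(* A quasivariety $\mathsf{K}$ has the weak ES property if and only if no finitely generated member of $\mathsf{K}$ has a subalgebra that is fully epic in $\mathsf{K}$.
   Context: A quasivariety is a class of similar algebras closed under isomorphic copies, subalgebras, direct products and ultraproducts. A quasivariety $\mathsf{K}$ has the weak ES property if every $\mathsf{K}$-epimorphism (homomorphism $f\colon\mathbf{A}\to\mathbf{B}$ between members of $\mathsf{K}$ such that $g\circ f=h\circ f$ implies $g=h$ for all homomorphisms $g,h$ from $\mathbf{B}$ into members of $\mathsf{K}$) between finitely generated members of $\mathsf{K}$ is surjective. $\mathbf{A}\leq\mathbf{B}$ is epic in $\mathsf{K}$ if the inclusion is a $\mathsf{K}$-epimorphism. $\mathrm{Con}_{\mathsf{K}}(\mathbf{B})$ is the set of congruences $\theta$ of $\mathbf{B}$ with $\mathbf{B}/\theta\in\mathsf{K}$. $\mathbf{A}\leq\mathbf{B}$ is full in $\mathsf{K}$ if it is proper, almost total ($B=\mathrm{Sg}^{\mathbf{B}}(A\cup\{b\})$ for some $b$), and for every $\theta\in\mathrm{Con}_{\mathsf{K}}(\mathbf{B})$ with $\theta\neq\mathrm{id}_B$ and every $b\in B$ there is $a\in A$ with $\langle a,b\rangle\in\theta$. It is fully epic in $\mathsf{K}$ if it is both full and epic in $\mathsf{K}$. *)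

(* Defs.v *)
From Stdlib Require List.
From mathcomp Require Import all_boot.

Set Implicit Arguments.
Unset Strict Implicit.
Unset Printing Implicit Defensive.

Section UA.
Variables (O : Type) (ar : O -> nat).

Record Alg := {
  car :> Type;
  op : forall o : O, ('I_(ar o) -> car) -> car;
  car_ne : inhabited car
}.
Arguments op : clear implicits.

Definition hom (A B : Alg) (f : A -> B) : Prop :=
  forall (o : O) (args : 'I_(ar o) -> A),
    f (op A o args) = op B o (fun k => f (args k)).

Definition surj (A B : Type) (f : A -> B) : Prop := forall b, exists a, f a = b.
Definition inj (A B : Type) (f : A -> B) : Prop := forall x y, f x = f y -> x = y.

Definition ultrafilter (I : Type) (U : (I -> Prop) -> Prop) : Prop :=
  U (fun _ => True) /\ ~ U (fun _ => False) /\
  (forall X Y : I -> Prop, U X -> (forall i, X i -> Y i) -> U Y) /\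
  (forall X Y : I -> Prop, U X -> U Y -> U (fun i => X i /\ Y i)) /\
  (forall X : I -> Prop, U X \/ U (fun i => ~ X i)).

Definition iso_to_product (I : Type) (Af : I -> Alg) (C : Alg) : Prop :=
  exists f : C -> forall i, Af i,
    (forall o (args : 'I_(ar o) -> C) i,
        f (op C o args) i = op (Af i) o (fun k => f (args k) i)) /\
    inj f /\ surj f.

(** [C] is isomorphic to the ultraproduct of [Af] over [U]: there is a
    surjective homomorphism from the direct product onto [C] whose kernel is
    the congruence [x ~ y iff {i | x i = y i} \in U]. *)
Definition iso_to_ultraproduct (I : Type) (Af : I -> Alg)
    (U : (I -> Prop) -> Prop) (C : Alg) : Prop :=
  exists f : (forall i, Af i) -> C,
    (forall o (args : 'I_(ar o) -> forall i, Af i),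
        f (fun i => op (Af i) o (fun k => args k i)) = op C o (fun k => f (args k))) /\
    surj f /\
    (forall x y, f x = f y <-> U (fun i => x i = y i)).

(** quasivariety: closed under isomorphic copies, subalgebras (together:
    anything embeddable into a member is a member), direct products and
    ultraproducts. *)
Definition quasivariety (K : Alg -> Prop) : Prop :=
  (forall (A B : Alg) (f : A -> B), K B -> hom f -> inj f -> K A) /\
  (forall (I : Type) (Af : I -> Alg) (C : Alg),
      (forall i, K (Af i)) -> iso_to_product Af C -> K C) /\
  (forall (I : Type) (Af : I -> Alg) (U : (I -> Prop) -> Prop) (C : Alg),
      (forall i, K (Af i)) -> ultrafilter U -> iso_to_ultraproduct Af U C -> K C).

Inductive Sg (B : Alg) (X : B -> Prop) : B -> Prop :=
| Sg_base : forall x, X x -> Sg X x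
| Sg_op : forall o (args : 'I_(ar o) -> B),
    (forall k, Sg X (args k)) -> Sg X (op B o args).

Definition fin_gen (B : Alg) : Prop :=
  exists l : list B, forall b, Sg (fun x => List.In x l) b.

Definition K_epi (K : Alg -> Prop) (A B : Alg) (f : A -> B) : Prop :=
  forall C : Alg, K C -> forall g h : B -> C, hom g -> hom h ->
    (forall a, g (f a) = h (f a)) -> forall b, g b = h b.

Definition weak_ES (K : Alg -> Prop) : Prop :=
  forall (A B : Alg) (f : A -> B), K A -> K B -> fin_gen A -> fin_gen B ->
    hom f -> K_epi K f -> surj f.

Definition subalg (B : Alg) (S : B -> Prop) : Prop :=
  (exists x, S x) /\
  (forall o (args : 'I_(ar o) -> B), (forall k, S (args k)) -> S (op B o args)).

Definition epic_in (K : Alg -> Prop) (B : Alg) (S : B -> Prop) : Prop :=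
  forall C : Alg, K C -> forall g h : B -> C, hom g -> hom h ->
    (forall a, S a -> g a = h a) -> forall b, g b = h b.

(** [theta \in Con_K(B)]: a congruence of [B] with [B/theta \in K]
    (the quotient is represented up to isomorphism as a surjective
    homomorphic image with kernel [theta]). *)
Definition ConK (K : Alg -> Prop) (B : Alg) (theta : B -> B -> Prop) : Prop :=
  (forall x, theta x x) /\ (forall x y, theta x y -> theta y x) /\
  (forall x y z, theta x y -> theta y z -> theta x z) /\
  (forall o (a b : 'I_(ar o) -> B), (forall k, theta (a k) (b k)) ->
      theta (op B o a) (op B o b)) /\
  exists (C : Alg) (p : B -> C), K C /\ hom p /\ surj p /\
    (forall x y, theta x y <-> p x = p y).

Definition full_in (K : Alg -> Prop) (B : Alg) (S : B -> Prop) : Prop :=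
  (exists b, ~ S b) /\
  (exists b, forall x, Sg (fun y => S y \/ y = b) x) /\
  (forall theta, ConK K theta -> (exists x y, theta x y /\ x <> y) ->
     forall b, exists a, S a /\ theta a b).

Definition fully_epic_in (K : Alg -> Prop) (B : Alg) (S : B -> Prop) : Prop :=
  full_in K S /\ epic_in K S.

End UA.

(* Main.v *)
Require Import Defs.
From mathcomp Require Import all_boot.
From mathcomp Require classical_sets filter boolp.
From Stdlib Require Import Classical ClassicalEpsilon FunctionalExtensionality PropExtensionality ProofIrrelevance.
From Stdlib Require List.

Set Implicit Arguments.
Unset Strict Implicit.
Unset Printing Implicit Defensive.

Lemma ultra_exists (I J : Type) (Bs : J -> I -> Prop) :
  (exists j : J, True) ->
  (forall j1 j2, exists j3, forall i, Bs j3 i -> Bs j1 i /\ Bs j2 i) ->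
  (forall j, exists i, Bs j i) ->
  exists U, ultrafilter U /\ forall j, U (Bs j).
Proof.
move=> [j0 _] Hdir Hne.
pose F := filter.filter_from classical_sets.setT Bs.
have FF : filter.ProperFilter F.
  apply: filter.filter_from_proper.
  - apply: filter.filter_fromT_filter; first by exists j0.
    move=> i j; have [k Hk] := Hdir i j; exists k => x /Hk.
    by [].
  - move=> j _; exact: Hne j.
have [G [GU sFG]] := filter.ultraFilterLemma FF.
have GF : filter.Filter G by apply: filter.filter_filter.
exists G; split; last first.
  by move=> j; apply: sFG; exists j.
split; first exact: (@filter.filterT _ _ GF).
split; first exact: (@filter.filter_not_empty _ _ (@filter.ultra_proper _ _ GU)).
split; first by move=> X Y GX XY; apply: (@filter.filterS _ _ GF X Y).
split; first by move=> X Y GX GY; exact: (@filter.filterI _ _ GF X Y).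
by move=> X; exact: (@filter.in_ultra_setVsetC _ G X GU).
Qed.

Section UF.
Variables (I : Type) (U : (I -> Prop) -> Prop) (HU : ultrafilter U).

Lemma uf_T : U (fun _ => True). Proof. by case: HU. Qed.
Lemma uf_nF : ~ U (fun _ => False). Proof. by case: HU => _ []. Qed.
Lemma uf_up X Y : U X -> (forall i, X i -> Y i) -> U Y.
Proof. by case: HU => _ [_ [H _]]; apply: H. Qed.
Lemma uf_I X Y : U X -> U Y -> U (fun i => X i /\ Y i).
Proof. by case: HU => _ [_ [_ [H _]]]; apply: H. Qed.
Lemma uf_C X : U X \/ U (fun i => ~ X i).
Proof. by case: HU => _ [_ [_ [_ H]]]; apply: H. Qed.
Lemma uf_ne X : U X -> exists i, X i.
Proof.
move=> UX; apply: NNPP => N; apply: uf_nF; apply: (uf_up UX) => i Xi; apply: N; by exists i.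
Qed.
Lemma uf_all X : (forall i, X i) -> U X.
Proof. by move=> H; apply: (uf_up uf_T) => i _; apply: H. Qed.

Lemma uf_seq (T : eqType) (X : T -> I -> Prop) (s : seq T) :
  (forall k, k \in s -> U (X k)) -> U (fun i => forall k, k \in s -> X k i).
Proof.
elim: s => [|a s IH] H; first by apply: uf_all.
have H1 : U (X a) by apply: H; rewrite in_cons eqxx.
have H2 : U (fun i => forall k, k \in s -> X k i).
  by apply: IH => k ks; apply: H; rewrite in_cons ks orbT.
apply: (uf_up (uf_I H1 H2)) => i [Ha Hs] k; rewrite in_cons => /orP [/eqP -> //|].
exact: Hs.
Qed.

Lemma uf_fin n (X : 'I_n -> I -> Prop) :
  (forall k, U (X k)) -> U (fun i => forall k, X k i).
Proof.
move=> H; have := @uf_seq _ X (enum 'I_n) (fun k _ => H k).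
by move=> H2; apply: (uf_up H2) => i Hi k; apply: Hi; rewrite mem_enum.
Qed.
Lemma uf_list (T : Type) (X : T -> I -> Prop) (l : list T) :
  (forall x, List.In x l -> U (X x)) -> U (fun i => forall x, List.In x l -> X x i).
Proof.
elim: l => [|a l IH] H; first by apply: uf_all => i x [].
have H1 : U (X a) by apply: H; left.
have H2 := IH (fun x hx => H x (or_intror hx)).
by apply: (uf_up (uf_I H1 H2)) => i [Ha Hl] x [<-|hx] //; apply: Hl.
Qed.
End UF.
Section UA2.
Variables (O : Type) (ar : O -> nat).

Lemma sig_eq (T : Type) (P : T -> Prop) (a b : sig P) : proj1_sig a = proj1_sig b -> a = b.
Proof.
case: a => x px; case: b => y py /= E; subst y.
by rewrite (proof_irrelevance _ px py).
Qed.

Definition choose_ex (T : Type) (P : T -> Prop) (H : exists x, P x) : T :=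
  proj1_sig (constructive_indefinite_description P H).
Lemma choose_exP (T : Type) (P : T -> Prop) (H : exists x, P x) : P (choose_ex H).
Proof. exact: (proj2_sig (constructive_indefinite_description P H)). Qed.

Section Ultra.
Variables (I : Type) (Af : I -> Alg ar) (U : (I -> Prop) -> Prop) (HU : ultrafilter U).
Definition Prd := forall i, Af i.
Definition ueq (x y : Prd) := U (fun i => x i = y i).
Lemma ueq_refl x : ueq x x. Proof. by apply: uf_all. Qed.
Lemma ueq_sym x y : ueq x y -> ueq y x.
Proof. by move=> H; apply: (uf_up HU H). Qed.
Lemma ueq_trans x y z : ueq x y -> ueq y z -> ueq x z.
Proof. by move=> H1 H2; apply: (uf_up HU (uf_I HU H1 H2)) => i [-> ->]. Qed.

Definition UPc := {P : Prd -> Prop | exists x, P = ueq x}.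
Definition cls (x : Prd) : UPc := exist _ (ueq x) (ex_intro _ x erefl).
Definition rep (d : UPc) : Prd := choose_ex (proj2_sig d).
Lemma cls_eq x y : cls x = cls y <-> ueq x y.
Proof.
split.
  move=> E; have E2 : ueq x = ueq y by exact: (f_equal (@proj1_sig _ _) E).
  by rewrite E2; apply: ueq_refl.
move=> H; apply: sig_eq => /=; apply: functional_extensionality => z.
apply: propositional_extensionality; split => H2.
  exact: ueq_trans (ueq_sym H) H2.
exact: ueq_trans H H2.
Qed.
Lemma cls_rep d : cls (rep d) = d.
Proof.
apply: sig_eq => /=; rewrite /rep; symmetry; exact: (choose_exP (proj2_sig d)).
Qed.
Lemma rep_cls x : ueq (rep (cls x)) x.
Proof. by apply/cls_eq; rewrite cls_rep. Qed.

Definition UPop o (args : 'I_(ar o) -> UPc) : UPc :=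
  cls (fun i => @op _ _ (Af i) o (fun k => rep (args k) i)).
Definition prd0 : Prd := fun i => epsilon (car_ne (Af i)) (fun _ => True).
Definition UPalg : Alg ar := @Build_Alg O ar UPc UPop (inhabits (cls prd0)).

Lemma UP_hom o (args : 'I_(ar o) -> Prd) :
  cls (fun i => @op _ _ (Af i) o (fun k => args k i)) = @op _ _ UPalg o (fun k => cls (args k)).
Proof.
rewrite /= /UPop; apply/cls_eq.
have H := uf_fin HU (fun k => rep_cls (args k)).
apply: (uf_up HU H) => i Hi /=; congr op; apply: functional_extensionality => k.
by rewrite Hi.
Qed.
End Ultra.

Lemma ultraprod (K : Alg ar -> Prop) (HK : quasivariety K) (I : Type) (Af : I -> Alg ar)
  (U : (I -> Prop) -> Prop) : ultrafilter U -> (forall i, K (Af i)) ->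
  exists (D : Alg ar) (q : (forall i, Af i) -> D), K D /\
    (forall o (args : 'I_(ar o) -> forall i, Af i),
       q (fun i => @op _ _ (Af i) o (fun k => args k i)) = @op _ _ D o (fun k => q (args k))) /\
    (forall x y, q x = q y <-> U (fun i => x i = y i)).
Proof.
move=> HU HKA.
have hom_q : forall o (args : 'I_(ar o) -> Prd Af), cls U (fun i => @op _ _ (Af i) o (fun k => args k i)) = @op _ _ (UPalg Af U) o (fun k => cls U (args k)).
  by move=> o args; apply: UP_hom.
have ker_q : forall x y : Prd Af, cls U x = cls U y <-> U (fun i => x i = y i).
  by move=> x y; apply: cls_eq.
exists (UPalg Af U), (cls U); split; last by split.
case: HK => _ [_ HKU]; apply: (HKU I Af U) => //.
exists (cls U); split => //; split => // d.
by exists (rep d); apply: cls_rep.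
Qed.

Definition SubA (B : Alg ar) (P : B -> Prop) (ne : exists x, P x)
  (cl : forall o (args : 'I_(ar o) -> B), (forall k, P (args k)) -> P (op args)) : Alg ar :=
  @Build_Alg O ar {x | P x}
    (fun o args => exist P (op (fun k => proj1_sig (args k))) (cl o _ (fun k => proj2_sig (args k))))
    (match ne with ex_intro x px => inhabits (exist P x px) end).

Lemma SubA_hom (B : Alg ar) (P : B -> Prop) ne cl : hom (fun x : SubA (P:=P) ne cl => proj1_sig x).
Proof. by []. Qed.

Lemma SubA_K (K : Alg ar -> Prop) (HK : quasivariety K) (B : Alg ar) (P : B -> Prop) ne cl :
  K B -> K (SubA (P:=P) ne cl).
Proof.
move=> KB; case: HK => HS _; apply: (HS _ B (fun x : SubA ne cl => proj1_sig x)) => //.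
by move=> x y; apply: sig_eq.
Qed.

Lemma Sg_hom (A B : Alg ar) (f : A -> B) (X : A -> Prop) (Y : B -> Prop) :
  hom f -> (forall x, X x -> Y (f x)) -> forall x, Sg X x -> Sg Y (f x).
Proof.
move=> hf XY x; elim => [y Xy|o args _ IH]; first by apply: Sg_base; apply: XY.
rewrite hf; apply: Sg_op => k; exact: IH.
Qed.

Lemma fin_gen_image (A B : Alg ar) (f : A -> B) : hom f -> surj f -> fin_gen A -> fin_gen B.
Proof.
move=> hf sf [l Hl]; exists (List.map f l) => b.
have [a <-] := sf b.
apply: (Sg_hom hf _ (Hl a)) => x Hx; exact: List.in_map.
Qed.

Lemma fin_gen_Sg (B : Alg ar) (l : list B) ne cl :
  fin_gen (SubA (P := Sg (fun x => List.In x l)) ne cl).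
Proof.
pose P := Sg (fun x => List.In x l).
pose e (x : B) : SubA (P:=P) ne cl :=
  match excluded_middle_informative (P x) with
  | left p => exist P x p
  | right _ => exist P (choose_ex ne) (choose_exP ne) end.
have eE : forall x (p : P x), e x = exist P x p.
  move=> x p; rewrite /e; case: excluded_middle_informative => [p'|n]; last by case: (n p).
  by rewrite (proof_irrelevance _ p p').
exists (List.map e l).
have claim : forall x, P x -> forall p : P x, Sg (B := SubA ne cl) (fun y => List.In y (List.map e l)) (exist P x p).
  move=> x; elim => [y Hy|o args Hargs IH] p.
    by apply: Sg_base; rewrite -(eE y p); apply: List.in_map.
  have -> : exist P (op args) p = @op _ _ (SubA ne cl) o (fun k => exist P (args k) (Hargs k)).
    by apply: sig_eq.
  by apply: Sg_op => k; apply: IH.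
by case=> x p; apply: claim.
Qed.

End UA2.
Section Dir1.
Variables (O : Type) (ar : O -> nat).

Lemma eqz_all (B C : Alg ar) (g h : B -> C) (l : list B) :
  hom g -> hom h -> (forall b, Sg (fun x => List.In x l) b) ->
  (forall j, List.In j l -> g j = h j) -> forall b, g b = h b.
Proof.
move=> hg hh Hl Hj b; elim: (Hl b) => [x Hx|o args _ IH]; first exact: Hj.
rewrite hg hh; congr op; apply: functional_extensionality => k; exact: IH.
Qed.

Lemma dir1 (K : Alg ar -> Prop) (HK : quasivariety K) :
  weak_ES K ->
  ~ (exists B : Alg ar, K B /\ fin_gen B /\
       exists S : B -> Prop, subalg S /\ fully_epic_in K S).
Proof.
move=> WES [B [KB [[l Hl] [S [[ne cl] [[[b0 nb0] _] epS]]]]]].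
pose s0 := choose_ex ne.
have Ss0 : S s0 := choose_exP ne.
have claim : forall F : list {x | S x}, exists C : Alg ar, exists g h : B -> C,
    K C /\ hom g /\ hom h /\ (forall y, List.In y F -> g (proj1_sig y) = h (proj1_sig y)) /\
    exists j, List.In j l /\ g j <> h j.
  move=> F.
  pose P := Sg (fun x => List.In x (s0 :: List.map (@proj1_sig _ _) F)).
  have neP : exists x, P x by exists s0; apply: Sg_base; left.
  have clP : forall o (args : 'I_(ar o) -> B), (forall k, P (args k)) -> P (op args).
    by move=> o args Ha; apply: Sg_op.
  have PS : forall x, P x -> S x.
    move=> x; elim => [y [<-|Hy]|o args _ IH]; first exact: Ss0.
      by have [z [<- _]] := proj1 (List.in_map_iff _ _ _) Hy; exact: (proj2_sig z).
    exact: cl.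
  pose A := SubA neP clP.
  pose f := fun x : A => proj1_sig x.
  have nsurj : ~ surj f.
    by move=> sf; have [a Ea] := sf b0; apply: nb0; rewrite -Ea; apply: PS; exact: (proj2_sig a).
  have nepi : ~ K_epi K f.
    move=> ep; apply: nsurj.
    have h1 : K A := SubA_K HK neP clP KB.
    have h2 : fin_gen A := fin_gen_Sg neP clP.
    have h3 : fin_gen B by exists l.
    have h4 : hom f by [].
    exact: (WES A B f h1 KB h2 h3 h4 ep).
  apply: NNPP => N; apply: nepi => C KC g h hg hh Hagree.
  apply: (eqz_all hg hh Hl) => j Hj; apply: NNPP => Nj; apply: N.
  exists C, g, h; do 4 (split => //).
    move=> y Hy; have Py : P (proj1_sig y).
      by apply: Sg_base; right; apply: List.in_map.
    exact: (Hagree (exist P (proj1_sig y) Py)).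
  by exists j.
pose CC := fun F => choose_ex (claim F).
pose gg := fun F => choose_ex (choose_exP (claim F)).
pose hh := fun F => choose_ex (choose_exP (choose_exP (claim F))).
have HH : forall F, K (CC F) /\ hom (gg F) /\ hom (hh F) /\
    (forall y, List.In y F -> gg F (proj1_sig y) = hh F (proj1_sig y)) /\
    exists j, List.In j l /\ gg F j <> hh F j.
  move=> F; exact: (choose_exP (choose_exP (choose_exP (claim F)))).
pose Bs := fun (F F' : list {x | S x}) => forall y, List.In y F -> List.In y F'.
have [U [HU UB]] : exists U, ultrafilter U /\ forall F, U (Bs F).
  apply: ultra_exists; first by exists nil.
    move=> F1 F2; exists (F1 ++ F2) => F' H; split => y Hy; apply: H; apply: List.in_or_app; by [left|right].
  by move=> F; exists F => y.
have [D [q [KD [hq kq]]]] := ultraprod HK HU (fun F => proj1 (HH F)).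
pose G := fun x => q (fun F => gg F x).
pose H := fun x => q (fun F => hh F x).
have homG : hom G.
  move=> o args; rewrite /G -(hq o (fun k F => gg F (args k))); congr q; apply: functional_extensionality_dep => F.
  by have [_ [hg _]] := HH F; rewrite hg.
have homH : hom H.
  move=> o args; rewrite /H -(hq o (fun k F => hh F (args k))); congr q; apply: functional_extensionality_dep => F.
  by have [_ [_ [hh' _]]] := HH F; rewrite hh'.
have agree : forall a, S a -> G a = H a.
  move=> a Sa; apply/kq; apply: (uf_up HU (UB [:: exist S a Sa])) => F HF.
  have [_ [_ [_ [Hy _]]]] := HH F; apply: (Hy (exist S a Sa)); apply: HF; by left.
have all := epS D KD G H homG homH agree.
have UL : U (fun F => forall j, List.In j l -> gg F j = hh F j).
  by apply: uf_list => // j _; apply/kq; apply: all.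
have [F HF] := uf_ne HU UL.
have [_ [_ [_ [_ [j [Hj Nj]]]]]] := HH F.
by apply: Nj; apply: HF.
Qed.
End Dir1.
Section Dir2.
Variables (O : Type) (ar : O -> nat).

Lemma In_mem (T : eqType) (x : T) (s : seq T) : x \in s -> List.In x s.
Proof.
elim: s => [//|a s IH]; rewrite in_cons => /orP [/eqP ->|H]; [by left|by right; apply: IH].
Qed.

Lemma chain_fin (T X : Type) (A : T -> Prop) (Le : T -> T -> Prop)
  (tot : forall s t, A s -> A t -> Le s t \/ Le t s) (t0 : T) (At0 : A t0)
  (P : X -> T -> Prop) (mono : forall x s t, P x s -> Le s t -> P x t) (l : list X) :
  (forall x, List.In x l -> exists t, A t /\ P x t) ->
  exists t, A t /\ forall x, List.In x l -> P x t.
Proof.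
elim: l => [|a l IH] H; first by exists t0; split => // x [].
have [s [As Ps]] := H a (or_introl erefl).
have [t [At Pt]] := IH (fun x hx => H x (or_intror hx)).
have [st|ts] := tot s t As At.
  exists t; split => // x [<-|hx]; [exact: mono Ps st|exact: Pt].
exists s; split => // x [<-|hx]; [exact: Ps|exact: mono (Pt x hx) ts].
Qed.

Lemma chain_ord (T : Type) (A : T -> Prop) (Le : T -> T -> Prop)
  (tot : forall s t, A s -> A t -> Le s t \/ Le t s) (t0 : T) (At0 : A t0)
  n (P : 'I_n -> T -> Prop) (mono : forall x s t, P x s -> Le s t -> P x t) :
  (forall x, exists t, A t /\ P x t) ->
  exists t, A t /\ forall x, P x t.
Proof.
move=> H; have [t [At Ht]] := chain_fin tot At0 mono (l := enum 'I_n) (fun x _ => H x).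
by exists t; split => // x; apply: Ht; apply: In_mem; rewrite mem_enum.
Qed.

Lemma choice_ord n (T : Type) (P : 'I_n -> T -> Prop) :
  (forall k, exists x, P k x) -> exists g : 'I_n -> T, forall k, P k (g k).
Proof. move=> H; exists (fun k => choose_ex (H k)) => k; exact: choose_exP. Qed.

Definition Good (K : Alg ar -> Prop) (A B : Alg ar) (f : A -> B) (t : (B -> B -> Prop) * (B -> Prop)) : Prop :=
  ConK K t.1 /\ (forall a, t.2 (f a)) /\
  (forall o (args : 'I_(ar o) -> B), (forall k, t.2 (args k)) -> t.2 (op args)) /\
  exists b, forall m, t.2 m -> ~ t.1 m b.

Definition LeP (B : Alg ar) (s t : (B -> B -> Prop) * (B -> Prop)) : Prop :=
  (forall x y, s.1 x y -> t.1 x y) /\ (forall x, s.2 x -> t.2 x).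

Lemma image_sub (K : Alg ar -> Prop) (HK : quasivariety K) (B D : Alg ar) (r : B -> D) :
  K D -> hom r -> exists (C : Alg ar) (p : B -> C), K C /\ hom p /\ surj p /\
    forall x y, p x = p y <-> r x = r y.
Proof.
move=> KD hr.
pose PI := fun d => exists x, r x = d.
have ne : exists d, PI d by case: (car_ne B) => x; exists (r x), x.
have cl : forall o (args : 'I_(ar o) -> D), (forall k, PI (args k)) -> PI (op args).
  move=> o args H; have [g Hg] := choice_ord H.
  exists (op g); rewrite hr; congr op; apply: functional_extensionality => k; exact: Hg.
exists (SubA ne cl), (fun x => exist PI (r x) (ex_intro _ x erefl)).
split; first exact: SubA_K.
split; first by move=> o args; apply: sig_eq => /=; rewrite hr.
split; first by case=> d [x Hx]; exists x; apply: sig_eq.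
move=> x y; split; first by move/(f_equal (@proj1_sig _ _)).
by move=> E; apply: sig_eq.
Qed.

Lemma chain_ConK (K : Alg ar -> Prop) (HK : quasivariety K) (B : Alg ar) (T : Type)
  (th : T -> B -> B -> Prop) (A : T -> Prop) (Le : T -> T -> Prop)
  (tot : forall s t, A s -> A t -> Le s t \/ Le t s) (t0 : T) (At0 : A t0)
  (Lerefl : forall t, Le t t) (Letrans : forall r s t, Le r s -> Le s t -> Le r t)
  (mono : forall s t x y, th s x y -> Le s t -> th t x y)
  (HC : forall t, A t -> ConK K (th t)) :
  ConK K (fun x y => exists t, A t /\ th t x y).
Proof.
split; first by move=> x; exists t0; split => //; have [H _] := HC t0 At0; apply: H.
split; first by move=> x y [t [At H]]; exists t; split => //; have [_ [H2 _]] := HC t At; apply: H2.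
split.
  move=> x y z [s [As Hs]] [t [At Ht]].
  have [st|ts] := tot s t As At.
    exists t; split => //; have [_ [_ [H _]]] := HC t At; exact: (H x y z (mono _ _ _ _ Hs st) Ht).
  exists s; split => //; have [_ [_ [H _]]] := HC s As; exact: (H x y z Hs (mono _ _ _ _ Ht ts)).
split.
  move=> o a b H.
  have [t [At Ht]] := chain_ord tot At0 (P := fun k t => th t (a k) (b k)) (fun k s t h l => mono _ _ _ _ h l) H.
  exists t; split => //; have [_ [_ [_ [H2 _]]]] := HC t At; exact: H2.
pose I := {t | A t}.
have HC' : forall i : I, exists (C : Alg ar) (p : B -> C), K C /\ hom p /\ surj p /\
    (forall x y, th (proj1_sig i) x y <-> p x = p y).
  by move=> [t At]; have [_ [_ [_ [_ H]]]] := HC t At; exact: H.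
pose Cf := fun i => choose_ex (HC' i).
pose pf := fun i => choose_ex (choose_exP (HC' i)).
have Hpf : forall i, K (Cf i) /\ hom (pf i) /\ surj (pf i) /\
    (forall x y, th (proj1_sig i) x y <-> pf i x = pf i y).
  by move=> i; exact: (choose_exP (choose_exP (HC' i))).
pose Bs := fun (j i : I) => Le (proj1_sig j) (proj1_sig i).
have [U [HU UB]] : exists U, ultrafilter U /\ forall j, U (Bs j).
  apply: ultra_exists; first by exists (exist A t0 At0).
    move=> [s As] [t At]; rewrite /Bs /=.
    have [st|ts] := tot s t As At.
      exists (exist A t At) => i /= Hi; split => //; exact: Letrans _ _ _ st Hi.
    exists (exist A s As) => i /= Hi; split => //; exact: Letrans _ _ _ ts Hi.
  by move=> j; exists j; apply: Lerefl.
have [D [q [KD [hq kq]]]] := ultraprod HK HU (fun i => proj1 (Hpf i)).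
pose r := fun x => q (fun i => pf i x).
have homr : hom r.
  move=> o args; rewrite /r -(hq o (fun k i => pf i (args k))); congr q.
  apply: functional_extensionality_dep => i.
  by have [_ [hg _]] := Hpf i; rewrite hg.
have [C [p [KC [hp [sp kp]]]]] := image_sub HK KD homr.
exists C, p; split => //; split => //; split => // x y; rewrite kp /r kq; split.
  move=> [t [At Ht]]; apply: (uf_up HU (UB (exist A t At))) => i Hi.
  have [_ [_ [_ Hk]]] := Hpf i; apply/Hk; exact: mono _ _ _ _ Ht Hi.
move=> H; have [i Hi] := uf_ne HU H.
have [_ [_ [_ Hk]]] := Hpf i; exists (proj1_sig i); split; first exact: (proj2_sig i).
by apply/Hk.
Qed.
End Dir2.
Section Dir2b.
Variables (O : Type) (ar : O -> nat).

Lemma dir2 (K : Alg ar -> Prop) (HK : quasivariety K) :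
  ~ (exists B : Alg ar, K B /\ fin_gen B /\
       exists S : B -> Prop, subalg S /\ fully_epic_in K S) -> weak_ES K.
Proof.
move=> NF A B f KA KB _ fgB hf epf; apply: NNPP => nsurj.
have [l Hl] := fgB.
pose T := {t | Good K f t}.
pose th := fun t : T => (proj1_sig t).1.
pose MM := fun t : T => (proj1_sig t).2.
pose R := fun s t : T => boolp.asbool (LeP (proj1_sig s) (proj1_sig t)).
have RP : forall s t, R s t <-> LeP (proj1_sig s) (proj1_sig t).
  by move=> s t; split => [/boolp.asboolP|H]; [|apply/boolp.asboolP].
have base : Good K f (fun x y => x = y, fun x => exists a, f a = x).
  split.
    rewrite /ConK /=; split; first by [].
    split; first by move=> x y ->.
    split; first by move=> x y z -> ->.
    split; first by move=> o a b H; congr op; apply: functional_extensionality.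
    exists B, id; do 3 (split => //); by move=> b; exists b.
  split; first by move=> a; exists a.
  split.
    move=> o args H; have [g Hg] := choice_ord H.
    exists (op g); rewrite hf; congr op; apply: functional_extensionality => k; exact: Hg.
  have [b Hb] := not_all_ex_not _ _ nsurj.
  exists b => m [a Ha] E; apply: Hb; exists a; by rewrite Ha.
have [tm Htm] : exists t, forall s, R t s -> s = t.
  apply: (classical_sets.Zorn (R := R)).
  - by move=> t; apply/RP; split.
  - move=> r s t /RP [h1 h2] /RP [h3 h4]; apply/RP; split => *; [apply: h3; apply: h1|apply: h4; apply: h2] => //.
  - move=> s t /RP [h1 h2] /RP [h3 h4]; apply: sig_eq.
    case: (proj1_sig s) h1 h2 h3 h4 => th1 M1; case: (proj1_sig t) => th2 M2 /= h1 h2 h3 h4.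
    congr pair.
      apply: functional_extensionality => x; apply: functional_extensionality => y.
      by apply: propositional_extensionality; split; [apply: h1|apply: h3].
    by apply: functional_extensionality => x; apply: propositional_extensionality; split; [apply: h2|apply: h4].
  - move=> Ch Htot.
    have [[t0 Ct0]|N0] := classic (exists t, Ch t); last first.
      exists (exist _ _ base) => s Cs; exfalso; apply: N0; by exists s.
    have tot : forall s t, Ch s -> Ch t -> LeP (proj1_sig s) (proj1_sig t) \/ LeP (proj1_sig t) (proj1_sig s).
      by move=> s t Cs Ct; case: (Htot s t Cs Ct) => /RP H; [left|right].
    pose thU := fun x y => exists t, Ch t /\ th t x y.
    pose MU := fun x => exists t, Ch t /\ MM t x.
    have G : Good K f (thU, MU).
      split.
        apply: (chain_ConK HK (th := th) (Le := fun s t => LeP (proj1_sig s) (proj1_sig t)) tot Ct0).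
        - by move=> t; split.
        - by move=> r s t [h1 h2] [h3 h4]; split => *; [apply: h3; apply: h1|apply: h4; apply: h2].
        - by move=> s t x y H [h1 _]; apply: h1.
        - by move=> t _; exact: (proj1 (proj2_sig t)).
      split.
        by move=> a; exists t0; split => //; exact: (proj1 (proj2 (proj2_sig t0))).
      split.
        move=> o args H.
        have [t [Ct Ht]] := chain_ord tot Ct0 (P := fun k t => MM t (args k)) (fun k s t h '(conj _ h2) => h2 _ h) H.
        exists t; split => //; exact: (proj1 (proj2 (proj2 (proj2_sig t)))).
      apply: NNPP => Nb.
      have Hall : forall b, exists m, MU m /\ thU m b.
        move=> b; apply: NNPP => Nb2; apply: Nb; exists b => m Mm Th; apply: Nb2; by exists m.
      have Hl2 : forall x, List.In x l -> exists t, Ch t /\ (exists m, MM t m /\ th t m x).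
        move=> x _; have [m [[s [Cs Ms]] [t [Ct Tt]]]] := Hall x.
        have [st|ts] := tot s t Cs Ct.
          exists t; split => //; exists m; split => //; exact: (proj2 st).
        exists s; split => //; exists m; split => //; exact: (proj1 ts).
      have [t [Ct Ht]] := chain_fin tot Ct0
        (P := fun x t => exists m, MM t m /\ th t m x)
        (fun x s t '(ex_intro m (conj h1 h2)) '(conj l1 l2) => ex_intro _ m (conj (l2 _ h1) (l1 _ _ h2))) Hl2.
      have [[_ [Tsym [Ttrans [Tcomp _]]]] [_ [Mcl [b Hb]]]] := proj2_sig t.
      have Sat : forall y, exists m, MM t m /\ th t m y.
        move=> y; elim: (Hl y) => [x Hx|o args _ IH]; first exact: Ht.
        have [g Hg] := choice_ord IH.
        exists (op g); split; first by apply: Mcl => k; exact: (proj1 (Hg k)).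
        by apply: Tcomp => k; exact: (proj2 (Hg k)).
      by have [m [Mm Tm]] := Sat b; exact: (Hb m Mm Tm).
    exists (exist _ _ G) => s Cs; apply/RP; split => /=.
      by move=> x y H; exists s.
    by move=> x H; exists s.
case: tm Htm => [[th0 M0] Gt] Htm.
have maxl : forall th' M' (G' : Good K f (th', M')), (forall x y, th0 x y -> th' x y) ->
    (forall x, M0 x -> M' x) -> th' = th0 /\ M' = M0.
  move=> th' M' G' h1 h2.
  have E := Htm (exist _ _ G') (proj2 (RP (exist _ _ Gt) (exist _ _ G')) (conj h1 h2)).
  by have := f_equal (@proj1_sig _ _) E; case=> -> ->.
have [[Trefl [Tsym [Ttrans [Tcomp [C [p [KC [hp [sp kp]]]]]]]]] [Mf [Mcl [b Hb]]]] := Gt.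
rewrite /= in Trefl Tsym Ttrans Tcomp kp Mf Mcl Hb.
pose S' := fun c => exists m, M0 m /\ p m = c.
apply: NF; exists C; split => //; split; first exact: (fin_gen_image hp sp fgB).
exists S'; split.
  split; first by case: (car_ne A) => a0; exists (p (f a0)), (f a0).
  move=> o args H; have [g Hg] := choice_ord H.
  exists (op g); split; first by apply: Mcl => k; exact: (proj1 (Hg k)).
  rewrite hp; congr op; apply: functional_extensionality => k; exact: (proj2 (Hg k)).
split; last first.
  move=> C' KC' g h hg hh Hag c.
  have hg' : hom (fun x => g (p x)) by move=> o args; rewrite hp hg.
  have hh' : hom (fun x => h (p x)) by move=> o args; rewrite hp hh.
  have E := epf C' KC' _ _ hg' hh' (fun a => Hag _ (ex_intro _ (f a) (conj (Mf a) erefl))).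
  by have [x <-] := sp c; exact: E.
split.
  exists (p b) => [[m [Mm Em]]]; apply: (Hb m Mm); exact/kp.
split.
  exists (p b).
  pose M' := fun y => Sg (fun z => S' z \/ z = p b) (p y).
  have [[b' Hb']|Nb'] := classic (exists b', forall m, M' m -> ~ th0 m b').
    have G' : Good K f (th0, M').
      split; first exact: (proj1 Gt).
      split; first by move=> a; apply: Sg_base; left; exists (f a).
      split; last by exists b'.
      by move=> o args H; rewrite /= /M' hp; apply: Sg_op => k; exact: H.
    have [_ EM] := maxl _ _ G' (fun x y h => h)
      (fun x Mx => Sg_base (or_introl (ex_intro _ x (conj Mx erefl)))).
    have Mb : M' b by apply: Sg_base; right.
    rewrite EM in Mb; exfalso; exact: (Hb b Mb (Trefl b)).
  move=> x; have [y <-] := sp x.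
  have [m [Mm Tm]] : exists m, M' m /\ th0 m y.
    apply: NNPP => N; apply: Nb'; exists y => m Mm Tm; apply: N; by exists m.
  by have -> : p y = p m by symmetry; apply/kp.
move=> psi [Prefl [Psym [Ptrans [Pcomp [C2 [p2 [KC2 [hp2 [sp2 kp2]]]]]]]]] [x [y [Pxy Nxy]]] c.
pose th' := fun u v => psi (p u) (p v).
have [b' <-] := sp c.
have [[b2 Hb2]|Nb'] := classic (exists b2, forall m, M0 m -> ~ th' m b2).
  have G' : Good K f (th', M0).
    split.
      split; first by move=> u; apply: Prefl.
      split; first by move=> u v; apply: Psym.
      split; first by move=> u v w; apply: Ptrans.
      split; first (move=> o a a' H; rewrite /= /th' !hp; apply: Pcomp; exact: H).
      exists C2, (fun u => p2 (p u)); split => //.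
      split; first by move=> o args; rewrite hp hp2.
      split; first by move=> z; have [w <-] := sp2 z; have [u <-] := sp w; exists u.
      by move=> u v; exact: kp2.
    by split; [exact: Mf|split; [exact: Mcl|exists b2]].
  have [Eth _] := maxl _ _ G' (fun u v h => eq_ind _ (fun z => psi (p u) z) (Prefl (p u)) _ (proj1 (kp u v) h)) (fun x h => h).
  exfalso; have [u Eu] := sp x; have [v Ev] := sp y; apply: Nxy; rewrite -Eu -Ev; apply/kp.
  have : th' u v by rewrite /th' Eu Ev.
  by rewrite Eth.
have [m [Mm Tm]] : exists m, M0 m /\ th' m b'.
  apply: NNPP => N; apply: Nb'; exists b' => m Mm Tm; apply: N; by exists m.
by exists (p m); split; [exists m|exact: Tm].
Qed.
End Dir2b.

Theorem mainTheorem4 (O : Type) (ar : O -> nat) (K : Alg ar -> Prop)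
  (HK : quasivariety K) :
  weak_ES K <->
  ~ (exists B : Alg ar, K B /\ fin_gen B /\
       exists S : B -> Prop, subalg S /\ fully_epic_in K S).
Proof. split; [exact: dir1|exact: dir2]. Qed.
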